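(* Let $\mathcal{H}$ be a finite set of hypotheses, $\mathcal{R}$ a finite collection of decision regions $r\subseteq\mathcal{H}$, and $\mathcal{G}$ the set of subregions. Let $k_{\mathrm{as}}=m+1$, where $m$ is the largest cardinality of a set $R\subseteq\mathcal{R}$ such that (1) some hypothesis $\tilde h$ lies in every region of $R$, and (2) for every $r\in R$ there is a hypothesis $h$ with $h\notin r$ and $h\in r'$ for all $r'\in R\setminus\{r\}$. Then $\max_{r\in\mathcal{R}}|\{g\in\mathcal{G}: g\subseteq r\}|+1\ge k_{\mathrm{as}}$.
   Context: Subregions: hypotheses are grouped into the same subregion iff they belong to exactly the same decision regions; $\mathcal{G}$ is the set of these classes, and $g\subseteq r$ means every hypothesis of $g$ lies in $r$. *)

(* Defs.v *)
From mathcomp Require Import all_boot.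
Set Implicit Arguments. Unset Strict Implicit. Unset Printing Implicit Defensive.

Section Regions.
Variable H : finType.
Variable Rs : {set {set H}}.

Definition region_sig (h : H) : {set {set H}} := [set r in Rs | h \in r].

Definition subregion_of (h : H) : {set H} :=
  [set h' | region_sig h' == region_sig h].

Definition subregions : {set {set H}} := [set subregion_of h | h : H].

Definition n_sub (r : {set H}) : nat := #|[set g in subregions | g \subset r]|.

Definition as_family (R : {set {set H}}) : bool :=
  [&& R \subset Rs,
      [exists ht : H, [forall r in R, ht \in r]] &
      [forall r in R, exists h : H,
          (h \notin r) && [forall r' in R :\ r, h \in r']]].

Definition k_as : nat :=
  (\max_(R : {set {set H}} | as_family R) #|R|).+1.

End Regions.

(* Main.v *)
Require Import Defs.
From mathcomp Require Import all_boot.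

Lemma sub_in (H : finType) (Rs : {set {set H}}) r h :
  r \in Rs -> h \in r -> subregion_of Rs h \subset r.
Proof.
move=> rR hr; apply/subsetP=> x; rewrite inE => /eqP e.
have : r \in region_sig Rs h by rewrite inE rR hr.
by rewrite -e inE => /andP[].
Qed.

Lemma sub_eq (H : finType) (Rs : {set {set H}}) x y :
  subregion_of Rs x = subregion_of Rs y -> region_sig Rs x = region_sig Rs y.
Proof.
move=> e; have : x \in subregion_of Rs x by rewrite inE.
by rewrite e inE => /eqP.
Qed.

Theorem proposition4 (H : finType) (Rs : {set {set H}}) :
  k_as Rs <= (\max_(r in Rs) n_sub Rs r).+1.
Proof.
rewrite /k_as ltnS; apply/bigmax_leqP => R /and3P[sRR /existsP[ht /forallP Ht] /forallP Hh].
have [R0|[r0 r0R]] := set_0Vmem R; first by rewrite R0 cards0.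
pose P (r : {set H}) (h : H) := (h \notin r) && [forall r' in R :\ r, h \in r'].
pose rep (r : {set H}) := if r == r0 then ht else odflt ht [pick h | P r h].
have repP r : r \in R -> r != r0 -> P r (rep r).
  move=> rR nr; rewrite /rep (negbTE nr).
  case: pickP => //= /(_ _) Hn; have := Hh r; rewrite rR /= => /existsP[h hP].
  by have := Hn h; rewrite /P hP.
have repin r r' : r \in R -> r' \in R -> r' != r -> rep r' \in r.
  move=> rR r'R ne; case: (eqVneq r' r0) => [->|n0].
    by rewrite /rep eqxx; have := Ht r; rewrite rR.
  have /andP[_ /forallP/(_ r)] := repP r' r'R n0.
  by rewrite !inE rR andbT eq_sym ne.
have Rs_sub r : r \in R -> r \in Rs by move=> rR; apply: (subsetP sRR).
pose f r := subregion_of Rs (rep r).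
have finj : {in R &, injective f}.
  move=> r1 r2 r1R r2R /sub_eq e; apply/eqP/negPn/negP => ne.
  have key a b : a \in R -> b \in R -> a != b -> a != r0 ->
      region_sig Rs (rep a) = region_sig Rs (rep b) -> False.
    move=> aR bR nab na0 ee.
    have /andP[na _] := repP a aR na0.
    have : a \in region_sig Rs (rep b) by rewrite inE Rs_sub //= repin // eq_sym.
    by rewrite -ee inE (negbTE na) andbF.
  case: (eqVneq r1 r0) => [e1|n1]; last exact: key e.
  have n2 : r2 != r0 by rewrite -e1 eq_sym.
  by apply: (key r2 r1) => //; rewrite eq_sym.
apply: (@leq_trans (n_sub Rs r0)); last exact: leq_bigmax_cond (Rs_sub _ r0R).
rewrite -(card_in_imset finj) /n_sub; apply: subset_leq_card.
apply/subsetP=> g /imsetP[r rR ->]; rewrite inE; apply/andP; split.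
  by apply/imsetP; exists (rep r).
apply: sub_in; first exact: Rs_sub.
case: (eqVneq r r0) => [->|n]; first by rewrite /rep eqxx; have := Ht r0; rewrite r0R.
by apply: repin.
Qed.
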